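(* Let $\Gamma$ be a connected graph and let $\rho,\sigma$ be equivalent frameworks of the cone graph $\Gamma*\{c\}$ in $\mathbb M^{d+1}$, with $\rho$ in general position. If $\rho$ is upper coned, then $\sigma$ is either upper coned or lower coned.
   Context: Minkowski space $\mathbb M^{d+1}$ is $\mathbb R^{d+1}$ with squared length $|x|^2=-x_1^2+\sum_{i=2}^{d+1}x_i^2$. The cone graph $\Gamma*\{c\}$ adds a new vertex $c$ to $\Gamma$ joined by an edge to every vertex of $\Gamma$. Frameworks are equivalent if $|\rho(t)-\rho(u)|^2=|\sigma(t)-\sigma(u)|^2$ for all edges. General position means every set of at most $d+2$ of the points is affinely independent. $\rho$ is upper coned if for all $t\in\mathcal V(\Gamma)$, $|\rho(t)-\rho(c)|^2<0$ and $(\rho(t)-\rho(c))_1>0$; lower coned if $|\rho(t)-\rho(c)|^2<0$ and $(\rho(t)-\rho(c))_1<0$ for all $t\in\mathcal V(\Gamma)$. *)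

(* Defs.v *)
From HB Require Import structures.
From mathcomp Require Import all_boot all_order all_algebra.
Set Implicit Arguments. Unset Strict Implicit. Unset Printing Implicit Defensive.
Import Order.TTheory GRing.Theory Num.Theory.
Local Open Scope ring_scope.

(* Minkowski space M^{d+1}: row vectors of length d+1; coordinate ord0 is
   the time coordinate x_1. |x|^2 = -x_1^2 + sum_{i>=2} x_i^2. *)
Definition mink (R : rcfType) (d : nat) (x : 'rV[R]_(d.+1)) : R :=
  - (x 0 ord0) ^+ 2 + \sum_(i < d) (x 0 (lift ord0 i)) ^+ 2.

Definition tcoord (R : rcfType) (d : nat) (x : 'rV[R]_(d.+1)) : R := x 0 ord0.

Definition simple_graph (T : finType) (e : rel T) : Prop :=
  symmetric e /\ irreflexive e.
Definition connected_graph (T : finType) (e : rel T) : Prop :=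
  forall x y : T, connect e x y.

(* Cone graph Gamma * {c}: vertex set option T, with c = None. *)
Definition cone_edge (T : finType) (e : rel T) : rel (option T) :=
  fun u v => match u, v with
             | Some x, Some y => e x y
             | Some _, None | None, Some _ => true
             | None, None => false
             end.

Definition equivalent_fw (R : rcfType) (d : nat) (T : finType) (e : rel T)
  (rho sigma : option T -> 'rV[R]_(d.+1)) : Prop :=
  forall u v, cone_edge e u v -> mink (rho u - rho v) = mink (sigma u - sigma v).

Definition affinely_independent (R : rcfType) (d : nat) (V : finType)
  (rho : V -> 'rV[R]_(d.+1)) (S : {set V}) : Prop :=
  forall lam : V -> R,
    \sum_(s in S) lam s = 0 -> \sum_(s in S) lam s *: rho s = 0 ->
    forall s, s \in S -> lam s = 0.

Definition general_position (R : rcfType) (d : nat) (V : finType)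
  (rho : V -> 'rV[R]_(d.+1)) : Prop :=
  forall S : {set V}, (#|S| <= d.+2)%N -> affinely_independent rho S.

Definition upper_coned (R : rcfType) (d : nat) (T : finType)
  (rho : option T -> 'rV[R]_(d.+1)) : Prop :=
  forall t : T, mink (rho (Some t) - rho None) < 0 /\
                0 < tcoord (rho (Some t) - rho None).

Definition lower_coned (R : rcfType) (d : nat) (T : finType)
  (rho : option T -> 'rV[R]_(d.+1)) : Prop :=
  forall t : T, mink (rho (Some t) - rho None) < 0 /\
                tcoord (rho (Some t) - rho None) < 0.

(* Main.v *)
Require Import Defs.
From HB Require Import structures.
From mathcomp Require Import all_boot all_order all_algebra.
From mathcomp Require Import ring lra.
Import Order.TTheory GRing.Theory Num.Theory.
Local Open Scope ring_scope.

Section Aux.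
Variables (R : rcfType) (d : nat).
Implicit Types x y : 'rV[R]_(d.+1).

Definition Bf x y : R := - (x 0 ord0 * y 0 ord0) +
  \sum_(i < d) x 0 (lift ord0 i) * y 0 (lift ord0 i).

Lemma mink_sub x y : mink (x - y) = mink x + mink y - 2 * Bf x y.
Proof.
rewrite /mink /Bf !mxE.
under eq_bigr => i _ do rewrite !mxE.
have -> : \sum_(i < d) (x 0 (lift ord0 i) - y 0 (lift ord0 i)) ^+ 2 =
  \sum_(i < d) x 0 (lift ord0 i) ^+ 2 + \sum_(i < d) y 0 (lift ord0 i) ^+ 2
  - 2 * \sum_(i < d) x 0 (lift ord0 i) * y 0 (lift ord0 i).
  rewrite mulr_sumr -big_split -sumrB /=; apply: eq_bigr => i _; ring.
ring.
Qed.

Lemma key x y : mink x < 0 -> mink y < 0 ->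
  x 0 ord0 * y 0 ord0 * Bf x y < 0.
Proof.
rewrite /mink /Bf.
set a := x 0 ord0; set b := y 0 ord0.
set U := \sum_(i < d) _ ^+ 2; set V := \sum_(i < d) _ ^+ 2.
set W := \sum_(i < d) _.
move=> hU hV.
have hU0 : 0 <= U by apply: sumr_ge0 => i _; exact: sqr_ge0.
have hV0 : 0 <= V by apply: sumr_ge0 => i _; exact: sqr_ge0.
have hW : 2 * a * b * W <= b ^+ 2 * U + a ^+ 2 * V.
  have h0 : 0 <= \sum_(i < d) (b * x 0 (lift ord0 i) - a * y 0 (lift ord0 i)) ^+ 2.
    by apply: sumr_ge0 => i _; exact: sqr_ge0.
  have -> : b ^+ 2 * U + a ^+ 2 * V = \sum_(i < d) (b * x 0 (lift ord0 i) - a * y 0 (lift ord0 i)) ^+ 2 + 2 * a * b * W.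
    rewrite /U /V /W !mulr_sumr -!big_split /=; apply: eq_bigr => i _; ring.
  lra.
have hb : 0 < b ^+ 2 by lra.
have ha : 0 < a ^+ 2 by lra.
have h1 : 0 < b ^+ 2 * (a ^+ 2 - U) by apply: mulr_gt0; lra.
have h2 : 0 <= a ^+ 2 * (b ^+ 2 - V) by apply: mulr_ge0; lra.
nra.
Qed.

End Aux.

Theorem mainTheorem19 (R : rcfType) (d : nat) (T : finType) (e : rel T)
  (rho sigma : option T -> 'rV[R]_(d.+1)) :
  simple_graph e -> connected_graph e ->
  equivalent_fw e rho sigma ->
  general_position rho ->
  upper_coned rho ->
  upper_coned sigma \/ lower_coned sigma.
Proof.
move=> _ hconn heq _ hup.
set s := fun t => tcoord (sigma (Some t) - sigma None).
have hms : forall t, mink (sigma (Some t) - sigma None) < 0.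
  by move=> t; rewrite -(heq (Some t) None) //; case: (hup t).
have hsq : forall t, 0 < s t * s t.
  move=> t; have := @key _ _ _ _ (hms t) (hms t); rewrite /s /tcoord.
  set a := (_ 0 ord0); move=> h.
  have : a != 0 by apply/eqP => a0; move: h; rewrite a0 !mul0r ltxx.
  move=> /negbTE a0; rewrite lt0r mulf_eq0 a0 /= -expr2; exact: sqr_ge0.
have hedge : forall t u, e t u -> 0 < s t * s u.
  move=> t u htu.
  have Bsig : forall f : option T -> 'rV[R]_(d.+1),
    2 * @Bf _ _ (f (Some t) - f None) (f (Some u) - f None) =
    mink (f (Some t) - f None) + mink (f (Some u) - f None)
    - mink (f (Some t) - f (Some u)).
    move=> f; rewrite -[f (Some t) - f (Some u)](_ : (f (Some t) - f None) - (f (Some u) - f None) = _).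
      rewrite (@mink_sub _ _ (f (Some t) - f None)); ring.
    by rewrite opprB addrA addrNK.

  have hB : @Bf _ _ (sigma (Some t) - sigma None) (sigma (Some u) - sigma None)
         = @Bf _ _ (rho (Some t) - rho None) (rho (Some u) - rho None).
    have := Bsig sigma; have := Bsig rho.
    rewrite -(heq (Some t) None) // -(heq (Some u) None) // -(heq (Some t) (Some u)) //.
    move=> h1 h2; have : 2 * @Bf _ _ (sigma (Some t) - sigma None) (sigma (Some u) - sigma None)
         = 2 * @Bf _ _ (rho (Some t) - rho None) (rho (Some u) - rho None) by rewrite h1 h2.
    move=> h; lra.
  have kr := @key _ _ _ _ (proj1 (hup t)) (proj1 (hup u)).
  have ks := @key _ _ _ _ (hms t) (hms u).
  move: (proj2 (hup t)) (proj2 (hup u)) kr ks; rewrite hB /s /tcoord.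
  set a := (rho _ - _) 0 ord0; set b := (rho _ - _) 0 ord0.
  set a' := (sigma _ - _) 0 ord0; set b' := (sigma _ - _) 0 ord0.
  set B := Bf _ _ _ _.
  move=> ha hb h1 h2.
  have hB0 : B < 0.
    have hab : 0 < a * b by apply: mulr_gt0.
    rewrite -(pmulr_rlt0 _ hab); exact: h1.
  move: h2 hB0; set P := a' * b'; move=> h2 hB0; nra.
case: (pickP (@predT T)) => [t0 _|hnone]; last first.
  by left=> t; have := hnone t.
have hall : forall y, 0 < s t0 * s y.
  move=> y; have /connectP [p hp ->] := hconn t0 y.
  have gen : forall q x, path e x q -> 0 < s t0 * s x -> 0 < s t0 * s (last x q).
    elim=> [|z q IH] x //= /andP [hxz hq] hx; apply: (IH z hq).
    have := hedge _ _ hxz; have := hsq x; nra.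
  exact: gen.
have ht0 : s t0 != 0 by move: (hsq t0); apply: contraTneq => ->; rewrite mul0r ltxx.
have hms' := hms.
case: (ltgtP (s t0) 0) => [hneg|hpos|/eqP]; last by rewrite (negbTE ht0).
  right=> t; split; first exact: hms.
  have := hall t; rewrite -/(s t); nra.
left=> t; split; first exact: hms.
have := hall t; rewrite -/(s t); nra.
Qed.
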